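(* Let $f:\mathbb{R}^n\to\mathbb{R}$ be bounded below and continuously differentiable with $\nabla f$ Lipschitz with constant $L_{\nabla f}$. Let $x\in\mathbb{R}^n$, $\Delta>0$, points $y_1,\ldots,y_p$ with $\|y_i-x\|\le\beta\Delta$ for some $\beta>0$ and all $i$, and let $m$ be the minimum Frobenius norm quadratic interpolation model described in the context, with $\hat F$ invertible. Then its Hessian satisfies $\|H\|\le\kappa_H:=\frac{L_{\nabla f}}{2}p\beta^4\|\hat F^{-1}\|_\infty$.
   Context: Here $n+2\le p\le(n+1)(n+2)/2-1$. Let $\hat s_i=(y_i-x)/\Delta$, $\hat M\in\mathbb{R}^{p\times(n+1)}$ with $i$-th row $[1,\hat s_i^T]$, $\hat P\in\mathbb{R}^{p\times p}$ with $\hat P_{ij}=\tfrac12(\hat s_i^T\hat s_j)^2$, and $\hat F=\begin{bmatrix}\hat P&\hat M\\ \hat M^T&0\end{bmatrix}\in\mathbb{R}^{(p+n+1)\times(p+n+1)}$. The model is $m(y)=c+g^T(y-x)+\tfrac12(y-x)^TH(y-x)$ where $(\hat\lambda_1,\ldots,\hat\lambda_p,c,\hat g)$ solves $\hat F[\hat\lambda;c;\hat g]=[f(y_1);\ldots;f(y_p);0;0_n]$, $g=\hat g/\Delta$, and $H=\sum_{i=1}^p\lambda_i(y_i-x)(y_i-x)^T$ with $\lambda_i=\hat\lambda_i/\Delta^4$; equivalently $(c,g,H)$ minimizes $\tfrac14\|H\|_F^2$ over symmetric $H$ subject to $m(y_i)=f(y_i)$ for all $i$. $\|A\|_\infty$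 is the maximum absolute row sum; $\|H\|$ is the operator 2-norm. *)

(* Defs.v *)
From HB Require Import structures.
From mathcomp Require Import all_boot all_order all_algebra.
From mathcomp Require Import all_classical all_reals all_analysis.
Set Implicit Arguments. Unset Strict Implicit. Unset Printing Implicit Defensive.
Import Order.TTheory GRing.Theory Num.Theory.
Import numFieldNormedType.Exports.
Local Open Scope classical_set_scope.
Local Open Scope ring_scope.

Definition dotv {R : realType} {n : nat} (u v : 'cV[R]_n) : R :=
  \sum_(k < n) u k 0 * v k 0.
Definition norm2 {R : realType} {n : nat} (v : 'cV[R]_n) : R :=
  Num.sqrt (dotv v v).

Definition opnorm2 {R : realType} {n : nat} (A : 'M[R]_n) : R :=
  sup [set norm2 (A *m v) | v in [set v : 'cV[R]_n | norm2 v <= 1]].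

Definition infnorm {R : realType} {m k : nat} (A : 'M[R]_(m, k)) : R :=
  \big[Num.max/0]_(i < m) \sum_(j < k) `|A i j|.

Definition grad {R : realType} {n : nat} (f : 'cV[R]_n -> R) (x : 'cV[R]_n)
  : 'cV[R]_n := \col_(j < n) ('d f x (delta_mx j 0 : 'cV[R]_n)).

Definition shat {R : realType} {n p : nat} (x : 'cV[R]_n) (Delta : R)
  (y : 'I_p -> 'cV[R]_n) (i : 'I_p) : 'cV[R]_n := Delta^-1 *: (y i - x).

Definition Mhat {R : realType} {n p : nat} (x : 'cV[R]_n) (Delta : R)
  (y : 'I_p -> 'cV[R]_n) : 'M[R]_(p, 1 + n) :=
  row_mx (const_mx 1) (\matrix_(i < p, k < n) shat x Delta y i k 0).

Definition Phat {R : realType} {n p : nat} (x : 'cV[R]_n) (Delta : R)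
  (y : 'I_p -> 'cV[R]_n) : 'M[R]_p :=
  \matrix_(i < p, j < p) (2^-1 * (dotv (shat x Delta y i) (shat x Delta y j)) ^+ 2).

Definition Fhat {R : realType} {n p : nat} (x : 'cV[R]_n) (Delta : R)
  (y : 'I_p -> 'cV[R]_n) : 'M[R]_(p + (1 + n)) :=
  block_mx (Phat x Delta y) (Mhat x Delta y) (Mhat x Delta y)^T 0.

Definition model_hessian {R : realType} {n p : nat} (x : 'cV[R]_n) (Delta : R)
  (y : 'I_p -> 'cV[R]_n) (lamhat : 'cV[R]_p) : 'M[R]_n :=
  \sum_(i < p) ((lamhat i 0 / Delta ^+ 4) *: ((y i - x) *m (y i - x)^T)).

(* Main.v *)
Require Import Defs.
From HB Require Import structures.
From mathcomp Require Import all_boot all_order all_algebra.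
From mathcomp Require Import all_classical all_reals all_analysis.
From mathcomp Require Import ring lra.
Import Order.TTheory GRing.Theory Num.Theory.
Import numFieldNormedType.Exports.
Local Open Scope classical_set_scope.
Local Open Scope ring_scope.

Section Dot.
Variables (R : realType) (n : nat).
Implicit Types u v w : 'cV[R]_n.

Lemma dotvC u v : dotv u v = dotv v u.
Proof. by apply: eq_bigr => k _; rewrite mulrC. Qed.

Lemma dotvDl u v w : dotv (u + v) w = dotv u w + dotv v w.
Proof. by rewrite /dotv -big_split; apply: eq_bigr => k _; rewrite !mxE mulrDl. Qed.

Lemma dotvZl a u v : dotv (a *: u) v = a * dotv u v.
Proof. by rewrite /dotv mulr_sumr; apply: eq_bigr => k _; rewrite !mxE mulrA. Qed.

Lemma dotvNl u v : dotv (- u) v = - dotv u v.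
Proof. by rewrite -scaleN1r dotvZl mulN1r. Qed.

Lemma dotvBl u v w : dotv (u - v) w = dotv u w - dotv v w.
Proof. by rewrite dotvDl dotvNl. Qed.

Lemma dotvZr a u v : dotv u (a *: v) = a * dotv u v.
Proof. by rewrite dotvC dotvZl dotvC. Qed.

Lemma dotvBr u v w : dotv w (u - v) = dotv w u - dotv w v.
Proof. by rewrite dotvC dotvBl !(dotvC w). Qed.

Lemma dotv_ge0 u : 0 <= dotv u u.
Proof. by apply: sumr_ge0 => k _; rewrite -expr2 sqr_ge0. Qed.

Lemma dotv_eq0 u : dotv u u = 0 -> u = 0.
Proof.
move=> /eqP; rewrite psumr_eq0 => [/allP H|k _]; last by rewrite -expr2 sqr_ge0.
apply/matrixP => i j; rewrite (ord1 j) mxE.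
have := H i (mem_index_enum _); rewrite implyTb -expr2 sqrf_eq0 => /eqP //.
Qed.

Lemma norm2_ge0 u : 0 <= norm2 u.
Proof. exact: sqrtr_ge0. Qed.

Lemma norm2_sq u : norm2 u ^+ 2 = dotv u u.
Proof. by rewrite /norm2 sqr_sqrtr // dotv_ge0. Qed.

Lemma CS2 u v : dotv u v ^+ 2 <= dotv u u * dotv v v.
Proof.
have [/dotv_eq0 ->|c0] := eqVneq (dotv v v) 0.
  have d0 w : dotv w (0 : 'cV[R]_n) = 0.
    by rewrite /dotv big1 // => k _; rewrite mxE mulr0.
  by rewrite !d0 expr0n mulr0.
have cp : 0 < dotv v v by rewrite lt_def c0 dotv_ge0.
set t := dotv u v / dotv v v.
have := dotv_ge0 (u - t *: v).
rewrite !dotvBl !dotvBr !dotvZl !dotvZr [dotv v u]dotvC.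
rewrite /t => H.
have e : dotv u u - dotv u v / dotv v v * dotv u v -
    (dotv u v / dotv v v * dotv u v - dotv u v / dotv v v * (dotv u v / dotv v v * dotv v v))
    = (dotv u u * dotv v v - dotv u v ^+ 2) / dotv v v.
  by field.
move: H; rewrite e => H; rewrite -subr_ge0.
by move: H; rewrite pmulr_lge0 // invr_gt0.
Qed.

Lemma CS u v : `|dotv u v| <= norm2 u * norm2 v.
Proof.
rewrite /norm2 -sqrtrM ?dotv_ge0 // -sqrtr_sqr.
by apply: ler_wsqrtr; apply: CS2.
Qed.

End Dot.
Lemma diff_dot (R : realType) n (f : 'cV[R]_n -> R) z h :
  'd f z h = dotv (grad f z) h.
Proof.
rewrite {1}(matrix_sum_delta h) linear_sum /dotv /=.
apply: eq_bigr => k _; rewrite big_ord1 linearZ /= mxE.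
by rewrite /GRing.scale /= mulrC.
Qed.

Lemma seg_derive (R : realType) n (f : 'cV[R]_n -> R) x h t :
  (forall z, differentiable f z) ->
  is_derive t (1:R) (fun s : R => f (s *: h + x)) ('d f (t *: h + x) h).
Proof.
move=> df.
pose u := fun s : R => s *: h + x.
have du : forall s, differentiable u s.
  move=> s; apply: differentiableD; last exact: differentiable_cst.
  exact: ex_diff.
have -> : (fun s : R => f (s *: h + x)) = f \o u by [].
have dd : 'd (f \o u) t 1 = 'd f (u t) h.
  rewrite diff_comp //=.
  have -> : 'd u t = ( *:%R^~ h) + 0 :> (R -> 'cV[R]_n).
    rewrite /u. apply: diff_val.
  by rewrite /= addr0 scale1r.
rewrite -dd -deriveE; last exact: differentiable_comp.
apply: derivableP; apply: diff_derivable; exact: differentiable_comp.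
Qed.

Lemma norm2Z (R : realType) n a (h : 'cV[R]_n) : norm2 (a *: h) = `|a| * norm2 h.
Proof.
by rewrite /norm2 dotvZl dotvZr mulrA -expr2 sqrtrM ?sqr_ge0 // sqrtr_sqr.
Qed.

Lemma arith_aux (R : realType) (A B G P K Q : R) :
  A - P - K - B = G - P - Q -> A - B - P - K = G - P - Q.
Proof. lra. Qed.

Lemma taylor_mvt (R : realType) n (f : 'cV[R]_n -> R) (x h : 'cV[R]_n) (K : R) :
  (forall z, differentiable f z) ->
  exists c : R, 0 < c < 1 /\ f (h + x) - f x - dotv (grad f x) h - K =
     dotv (grad f (c *: h + x)) h - dotv (grad f x) h - K * (c + c).
Proof.
move=> df.
pose a := dotv (grad f x) h.
pose g := fun s : R => f (s *: h + x).
pose psi := fun s : R => g s - a * s - K * (s * s).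
have D : forall t : R, is_derive t (1:R) psi
     (dotv (grad f (t *: h + x)) h - a - K * (t + t)).
  move=> t; have sd := @seg_derive _ _ f x h t df.
  have -> : psi = (g - a \*: id - K \*: (id * id)).
    by apply/funext => s.
  apply: is_derive_eq.
  rewrite -diff_dot /GRing.scale /= !mulr1. done.
have [c c01 E] := MVT (ltr01 : (0:R) < 1) (fun t _ => D t)
   (derivable_within_continuous (fun t _ => let: DeriveDef dd _ := D t in dd)).
move: E; rewrite /psi /g scale1r scale0r add0r !mulr0 !mulr1 !subr0 => E.
move: c01; rewrite in_itv /= => c01.
exists c; split => //.
rewrite mulr1 in E; move: E; rewrite /a; exact: arith_aux.
Qed.

Lemma grad_bound (R : realType) n (f : 'cV[R]_n -> R) (Lg : R) (x h : 'cV[R]_n) c :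
  (forall u v, norm2 (grad f u - grad f v) <= Lg * norm2 (u - v)) ->
  0 <= c ->
  `|dotv (grad f (c *: h + x)) h - dotv (grad f x) h| <= Lg / 2 * norm2 h ^+ 2 * (c + c).
Proof.
move=> hL c0.
rewrite -dotvBl; apply: (le_trans (CS _ _ _ _)).
have := hL (c *: h + x) x; rewrite addrK norm2Z => H.
rewrite ger0_norm // in H.
have -> : Lg / 2 * norm2 h ^+ 2 * (c + c) = (Lg * (c * norm2 h)) * norm2 h.
  by field.
by apply: ler_wpM2r => //; apply: norm2_ge0.
Qed.

Lemma arith2 (R : realType) (D G K Q G' Q' : R) :
  D - K = G - Q -> `|G| <= Q -> D - - K = G' - - Q' -> `|G'| <= Q' -> `|D| <= K.
Proof.
move=> E B E' B'; rewrite ler_norml; move: B B'; rewrite !ler_norml => /andP[? ?] /andP[? ?].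
apply/andP; split; lra.
Qed.

Lemma taylor (R : realType) n (f : 'cV[R]_n -> R) (Lg : R) (x h : 'cV[R]_n) :
  (forall z, differentiable f z) ->
  (forall u v, norm2 (grad f u - grad f v) <= Lg * norm2 (u - v)) ->
  `|f (h + x) - f x - dotv (grad f x) h| <= Lg / 2 * norm2 h ^+ 2.
Proof.
move=> df hL.
have [c [c01 E]] := @taylor_mvt _ _ f x h (Lg / 2 * norm2 h ^+ 2) df.
have [c' [c01' E']] := @taylor_mvt _ _ f x h (- (Lg / 2 * norm2 h ^+ 2)) df.
have c0 : 0 <= c by case/andP: c01 => /ltW.
have c0' : 0 <= c' by case/andP: c01' => /ltW.
have B := @grad_bound _ _ f Lg x h c hL c0.
have B' := @grad_bound _ _ f Lg x h c' hL c0'.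
rewrite mulNr in E'.
move: E B E' B'; exact: arith2.
Qed.
Lemma le_bigmax_seq (R : realType) (I : eqType) (F : I -> R) (s : seq I) k :
  k \in s -> F k <= \big[Num.max/0]_(i <- s) F i.
Proof.
elim: s => [//|a s IH]; rewrite inE big_cons le_max => /orP [/eqP ->|/IH ->].
  by rewrite lexx.
by rewrite orbT.
Qed.

Lemma bigmax_ge0 (R : realType) (I : eqType) (F : I -> R) (s : seq I) :
  0 <= \big[Num.max/0]_(i <- s) F i.
Proof.
elim: s => [|a s IH]; first by rewrite big_nil.
by rewrite big_cons le_max IH orbT.
Qed.

Lemma rowsum_le_infnorm (R : realType) m k (A : 'M[R]_(m, k)) i :
  \sum_(j < k) `|A i j| <= infnorm A.
Proof. by apply: (@le_bigmax_seq _ _ (fun i => \sum_(j < k) `|A i j|)); exact: mem_index_enum. Qed.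

Lemma infnorm_ge0 (R : realType) m k (A : 'M[R]_(m, k)) : 0 <= infnorm A.
Proof. exact: bigmax_ge0. Qed.

Lemma mulmx_bound (R : realType) m k (A : 'M[R]_(m, k)) (r : 'cV[R]_k) B i :
  0 <= B -> (forall j, `|r j 0| <= B) -> `|(A *m r) i 0| <= infnorm A * B.
Proof.
move=> B0 hr; rewrite mxE.
apply: (le_trans (ler_norm_sum _ _ _)).
apply: (le_trans (y := \sum_(j < k) `|A i j| * B)).
  apply: ler_sum => j _; rewrite normrM; apply: ler_wpM2l => //.
rewrite -mulr_suml; apply: ler_wpM2r => //; exact: rowsum_le_infnorm.
Qed.

Lemma dotv_suml (R : realType) n p (a : 'I_p -> 'cV[R]_n) (w : 'cV[R]_n) :
  dotv (\sum_(i < p) a i) w = \sum_(i < p) dotv (a i) w.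
Proof.
rewrite /dotv exchange_big /=; apply: eq_bigr => k _.
by rewrite summxE mulr_suml.
Qed.

Lemma outer_mul (R : realType) n (h v : 'cV[R]_n) :
  h *m h^T *m v = dotv h v *: h.
Proof.
apply/matrixP => k l; rewrite (ord1 l) !mxE /dotv mulr_suml.
by apply: eq_bigr => j _; rewrite !mxE big_ord1 !mxE; ring.
Qed.

Lemma term_bound (R : realType) (a d1 d2 N1 N2 N3 C : R) :
  `|d1| <= N1 * N2 -> `|d2| <= N1 * N3 -> `|a| * N1 ^+ 2 <= C ->
  0 <= N1 -> 0 <= N2 -> 0 <= N3 -> N2 <= 1 -> `|a * (d1 * d2)| <= C * N3.
Proof.
move=> h1 h2 h3 n1 n2 n3 hv.
rewrite !normrM.
have a0 := normr_ge0 a.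
have b10 := normr_ge0 d1.
have b20 := normr_ge0 d2.
move: (`|a|) (`|d1|) (`|d2|) a0 b10 b20 h1 h2 h3 => a' b1 b2 a0 b10 b20 h1 h2 h3.
apply: (le_trans (y := a' * ((N1 * N2) * (N1 * N3)))).
  apply: ler_pM => //; [exact: mulr_ge0 | exact: ler_pM].
have e : a' * (N1 * N2 * (N1 * N3)) = (a' * N1 ^+ 2) * (N2 * N3) by ring.
rewrite e; apply: ler_pM => //.
- by apply: mulr_ge0 => //; apply: exprn_ge0.
- exact: mulr_ge0.
- have : N2 * N3 <= 1 * N3 by apply: ler_pM.
  by rewrite mul1r.
Qed.

Lemma hess_bound (R : realType) n p (x : 'cV[R]_n) (Delta : R) (y : 'I_p -> 'cV[R]_n)
  (lamhat : 'cV[R]_p) (C : R) v :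
  (forall i, `|lamhat i 0 / Delta ^+ 4| * norm2 (y i - x) ^+ 2 <= C) ->
  norm2 v <= 1 ->
  norm2 (model_hessian x Delta y lamhat *m v) <= p%:R * C.
Proof.
move=> hC hv.
set H := model_hessian x Delta y lamhat.
set w := H *m v.
have C0 : 0 <= p%:R * C.
  have [p0|pp] := posnP p; first by rewrite p0 mul0r.
  apply: mulr_ge0 => //; apply: le_trans (hC (Ordinal pp)).
  by apply: mulr_ge0 => //; apply: exprn_ge0; apply: norm2_ge0.
have E : dotv w w = \sum_(i < p) (lamhat i 0 / Delta ^+ 4) * (dotv (y i - x) v * dotv (y i - x) w).
  rewrite /w /H /model_hessian mulmx_suml dotv_suml; apply: eq_bigr => i _.
  by rewrite -scalemxAl outer_mul !dotvZl.
have B : dotv w w <= p%:R * C * norm2 w.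
  rewrite E; apply: (le_trans (ler_norm _)).
  apply: (le_trans (ler_norm_sum _ _ _)).
  apply: (le_trans (y := \sum_(i < p) C * norm2 w)); last first.
    by rewrite sumr_const card_ord -mulrnAl -mulr_natl.
  apply: ler_sum => i _.
  apply: term_bound; [exact: CS|exact: CS|exact: hC|exact: norm2_ge0|exact: norm2_ge0|exact: norm2_ge0|exact: hv].
have nw0 := norm2_ge0 _ _ w.
have [w0|wpos] := eqVneq (norm2 w) 0.
  by rewrite w0.
have wp : 0 < norm2 w by rewrite lt_def wpos nw0.
rewrite -(ler_pM2r wp) -expr2 norm2_sq.
exact: B.
Qed.

Lemma final_arith (R : realType) (l D s K L b : R) : 0 < D -> 0 <= s -> s <= b * D ->
  `|l| <= K * (L / 2 * (b * D) ^+ 2) -> `|l / D ^+ 4| * s ^+ 2 <= L / 2 * b ^+ 4 * K.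
Proof.
move=> D0 s0 sb hl.
have B0 : 0 <= K * (L / 2 * (b * D) ^+ 2) := le_trans (normr_ge0 _) hl.
have D4 : 0 < D ^+ 4 := exprn_gt0 _ D0.
rewrite normrM normfV (gtr0_norm D4).
apply: (le_trans (y := (K * (L / 2 * (b * D) ^+ 2)) / D ^+ 4 * (b * D) ^+ 2)).
  apply: ler_pM.
  - by apply: mulr_ge0 => //; rewrite invr_ge0 ltW.
  - exact: exprn_ge0.
  - by rewrite ler_pM2r // invr_gt0.
  - by rewrite !expr2; apply: ler_pM.
have DD : D != 0 by rewrite gt_eqF.
by rewrite le_eqVlt; apply/orP; left; apply/eqP; field.
Qed.

Theorem lemma5p14 (R : realType) (n p : nat) (f : 'cV[R]_n -> R) (Lg : R)
  (x : 'cV[R]_n) (Delta beta : R) (y : 'I_p -> 'cV[R]_n)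
  (lamhat : 'cV[R]_p) (c : 'cV[R]_1) (ghat : 'cV[R]_n) :
  (n + 2 <= p)%N -> (p <= ((n + 1) * (n + 2)) %/ 2 - 1)%N ->
  (exists b : R, forall z, b <= f z) ->
  (forall z, differentiable f z) ->
  continuous (grad f) ->
  (forall u v, norm2 (grad f u - grad f v) <= Lg * norm2 (u - v)) ->
  0 < Delta -> 0 < beta ->
  (forall i, norm2 (y i - x) <= beta * Delta) ->
  Fhat x Delta y \in unitmx ->
  Fhat x Delta y *m col_mx lamhat (col_mx c ghat)
    = col_mx (\col_(i < p) f (y i)) 0 ->
  opnorm2 (model_hessian x Delta y lamhat)
    <= Lg / 2 * p%:R * beta ^+ 4 * infnorm (invmx (Fhat x Delta y)).
Proof.
move=> hp1 hp2 _ df _ hL D0 b0 hy hU hF.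
have n0 : (0 < n)%N.
  rewrite lt0n; apply/negP => /eqP n0; move: hp1 hp2; rewrite n0 => h1 h2.
  by have := leq_trans h1 h2.
have Lg0 : 0 <= Lg.
  pose e : 'cV[R]_n := delta_mx (Ordinal n0) 0.
  have := hL e 0; rewrite !subr0.
  have -> : norm2 e = 1.
    rewrite /norm2 /dotv (bigD1 (Ordinal n0)) //= big1 ?addr0.
      by rewrite mxE !eqxx mulr1 sqrtr1.
    by move=> k /negbTE kn; rewrite mxE kn mul0r.
  by rewrite mulr1; apply: le_trans; apply: norm2_ge0.
set B := Lg / 2 * (beta * Delta) ^+ 2.
have B0 : 0 <= B.
  by apply: mulr_ge0; [apply: mulr_ge0 | apply: exprn_ge0; apply: mulr_ge0; apply: ltW].
pose Finv := invmx (Fhat x Delta y).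
pose w : 'cV[R]_(1 + n) := col_mx (const_mx (f x)) (Delta *: grad f x).
pose r := col_mx (\col_(i < p) f (y i)) 0 - Fhat x Delta y *m col_mx 0 w.
have DD : Delta != 0 by rewrite gt_eqF.
have Mw : forall i, (Mhat x Delta y *m w) i 0 = f x + dotv (grad f x) (y i - x).
  move=> i; rewrite /Mhat /w mul_row_col mxE; congr (_ + _).
    by rewrite mxE big_ord1 !mxE mul1r.
  rewrite mxE /dotv; apply: eq_bigr => k _; rewrite !mxE; field; exact: DD.
have Fw : Fhat x Delta y *m col_mx 0 w = col_mx (Mhat x Delta y *m w) 0.
  by rewrite /Fhat mul_block_col !mulmx0 mul0mx add0r addr0.
have Z : col_mx lamhat (col_mx c ghat) - col_mx 0 w = Finv *m r.
  by rewrite /r -hF -mulmxBr mulKmx.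
have lam_eq ii : lamhat ii 0 = (Finv *m r) (lshift _ ii) 0.
  by rewrite -Z mxE !col_mxEu mxE col_mxEu mxE subr0.
have rb : forall j, `|r j 0| <= B.
  move=> j; rewrite /r Fw -[j]fintype.splitK; case: (fintype.split j) => k /=; rewrite mxE opp_col_mx.
    rewrite !col_mxEu [(- (Mhat x Delta y *m w)) k 0]mxE Mw mxE opprD addrA.
    have := @taylor _ _ f Lg x (y k - x) df hL; rewrite subrK => T.
    apply: le_trans T _; apply: ler_pM => //.
    - by apply: mulr_ge0.
    - by apply: exprn_ge0; apply: norm2_ge0.
    - by rewrite !expr2; apply: ler_pM => //; apply: norm2_ge0.
  by rewrite !col_mxEd !mxE subr0 normr0.
have lamb ii : `|lamhat ii 0| <= infnorm Finv * B.
  by rewrite lam_eq; apply: mulmx_bound.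
rewrite /opnorm2; apply: ge_sup.
  exists (norm2 (model_hessian x Delta y lamhat *m 0)); exists 0 => //=.
  have -> : norm2 (0 : 'cV[R]_n) = 0.
    by rewrite /norm2 /dotv big1 ?sqrtr0 // => k _; rewrite mxE mul0r.
  exact: ler01.
move=> _ [v hv <-].
have hC : forall i, `|lamhat i 0 / Delta ^+ 4| * norm2 (y i - x) ^+ 2
     <= Lg / 2 * beta ^+ 4 * infnorm Finv.
  move=> i; apply: final_arith => //; first exact: norm2_ge0.
apply: le_trans (@hess_bound _ _ _ _ _ _ _ _ _ hC hv) _.
by rewrite le_eqVlt; apply/orP; left; apply/eqP; rewrite /Finv; ring.
Qed.
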